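(* Let $\mathcal D$ be universal, $\mathrm M=(M,d)\in\mathfrak U_{\mathcal D}$, and $r\in\mathcal D$, $r>0$, with $(r,2r]\cap\mathcal D=\emptyset$. Let $A_0,\dots,A_{n-1}$ be pairwise distinct $\sim_r$-equivalence classes. Then there exist points $a_i\in A_i$ ($i<n$) with $d(a_i,a_j)=d_{\min}(A_i,A_j)$ for all $i,j<n$.
   Context: $\mathcal D$ is a finite subset of $\mathbb R_{\ge0}$ containing $0$. $\mathfrak U_{\mathcal D}$ is the class of countable homogeneous metric spaces (every isometry between finite subspaces extends to an isometry of the space onto itself) with distance set exactly $\mathcal D$ into which every finite metric space with distances in $\mathcal D$ embeds isometrically; $\mathcal D$ is universal if this class is nonempty. $x\sim_r y$ iff $d(x,y)\le r$. For $A,B\subseteq M$, $d_{\min}(A,B)=\min\{d(a,b):a\in A,b\in B\}$. *)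

(* Defs.v *)
From Stdlib Require Import Reals List.
Open Scope R_scope.

Definition dist_set_ok (D : list R) : Prop :=
  In 0 D /\ (forall t, In t D -> 0 <= t).

Definition is_metric {M : Type} (d : M -> M -> R) : Prop :=
  (forall x y, 0 <= d x y) /\
  (forall x y, d x y = 0 <-> x = y) /\
  (forall x y, d x y = d y x) /\
  (forall x y z, d x z <= d x y + d y z).

Definition countable_type (M : Type) : Prop :=
  exists g : M -> nat, forall x y, g x = g y -> x = y.

Definition dist_set_exactly {M : Type} (d : M -> M -> R) (D : list R) : Prop :=
  (forall x y, In (d x y) D) /\ (forall t, In t D -> exists x y, d x y = t).

(* Homogeneity: every isometry between finite subspaces (given as the list of
   its graph pairs (x, image of x)) extends to an isometry of M onto itself. *)
Definition homogeneous {M : Type} (d : M -> M -> R) : Prop :=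
  forall l : list (M * M),
    (forall p q, In p l -> In q l -> d (fst p) (fst q) = d (snd p) (snd q)) ->
    exists h : M -> M,
      (forall y, exists x, h x = y) /\
      (forall x y, d (h x) (h y) = d x y) /\
      (forall p, In p l -> h (fst p) = snd p).

Definition finite_metric_in (D : list R) (n : nat) (e : nat -> nat -> R) : Prop :=
  (forall i j, (i < n)%nat -> (j < n)%nat -> 0 <= e i j) /\
  (forall i j, (i < n)%nat -> (j < n)%nat -> (e i j = 0 <-> i = j)) /\
  (forall i j, (i < n)%nat -> (j < n)%nat -> e i j = e j i) /\
  (forall i j k, (i < n)%nat -> (j < n)%nat -> (k < n)%nat -> e i k <= e i j + e j k) /\
  (forall i j, (i < n)%nat -> (j < n)%nat -> In (e i j) D).

Definition universal_for {M : Type} (d : M -> M -> R) (D : list R) : Prop :=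
  forall n e, finite_metric_in D n e ->
    exists f : nat -> M, forall i j, (i < n)%nat -> (j < n)%nat -> d (f i) (f j) = e i j.

Definition in_UD (D : list R) (M : Type) (d : M -> M -> R) : Prop :=
  is_metric d /\ countable_type M /\ homogeneous d /\
  dist_set_exactly d D /\ universal_for d D.

Definition universal_D (D : list R) : Prop :=
  exists (M : Type) (d : M -> M -> R), in_UD D M d.

Definition sim_class {M : Type} (d : M -> M -> R) (r : R) (A : M -> Prop) : Prop :=
  exists x, forall y, A y <-> d x y <= r.

Definition is_dmin {M : Type} (d : M -> M -> R) (A B : M -> Prop) (m : R) : Prop :=
  (exists a b, A a /\ B b /\ d a b = m) /\
  (forall a b, A a -> B b -> m <= d a b).

(* Main.v *)
Require Import Defs.
From Stdlib Require Import Reals List.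
From Stdlib Require Import Lra Lia Classical ClassicalEpsilon.
Open Scope R_scope.

Lemma list_min (P : R -> Prop) (L : list R) :
  (exists t, In t L /\ P t) -> exists m, In m L /\ P m /\ forall t, In t L -> P t -> m <= t.
Proof.
  induction L as [|a L IH]; intros [t [Ht HP]]; [destruct Ht|].
  destruct (classic (exists t, In t L /\ P t)) as [Hex|Hno].
  - destruct (IH Hex) as [m [Hm [HPm Hmin]]]. destruct (Rle_dec a m).
    + destruct (classic (P a)).
      * exists a. split; [left; auto|]. split; auto. intros t' [<-|Ht'] HP'; [lra|].
        specialize (Hmin t' Ht' HP'); lra.
      * exists m. split; [right; auto|]. split; auto. intros t' [<-|Ht'] HP'; [contradiction|auto].
    + exists m. split; [right; auto|]. split; auto. intros t' [<-|Ht'] HP'; [lra|auto].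
  - destruct Ht as [<-|Ht]; [|exfalso; apply Hno; eauto].
    exists a. split; [left; auto|]. split; auto. intros t' [<-|Ht'] HP'; [lra|].
    exfalso; apply Hno; eauto.
Qed.

Lemma dmin_sym {M : Type} (d : M -> M -> R) (Hsym : forall x y, d x y = d y x) A B m :
  is_dmin d A B m -> is_dmin d B A m.
Proof.
  intros [[a [b [Ha [Hb Hab]]]] Hl]. split.
  - exists b, a. rewrite Hsym. auto.
  - intros x y Hx Hy. rewrite Hsym. auto.
Qed.

Lemma dmin_unique {M : Type} (d : M -> M -> R) A B m m' :
  is_dmin d A B m -> is_dmin d A B m' -> m = m'.
Proof.
  intros [[a [b [Ha [Hb Hab]]]] Hl] [[a' [b' [Ha' [Hb' Hab']]]] Hl'].
  specialize (Hl a' b' Ha' Hb'). specialize (Hl' a b Ha Hb). lra.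
Qed.

Lemma extension {M : Type} (D : list R) (d : M -> M -> R)
  (Hnn : forall x y, 0 <= d x y) (Hzero : forall x y, d x y = 0 <-> x = y)
  (Hsym : forall x y, d x y = d y x) (Htri : forall x y z, d x z <= d x y + d y z)
  (HinD : forall x y, In (d x y) D) (H0 : In 0 D)
  (Hhom : homogeneous d) (Hun : universal_for d D)
  (K : nat) (x : nat -> M) (t : nat -> R)
  (Hinj : forall i j, (i < K)%nat -> (j < K)%nat -> x i = x j -> i = j)
  (Ht : forall i, (i < K)%nat -> In (t i) D /\ 0 < t i)
  (Hpair : forall i j, (i < K)%nat -> (j < K)%nat ->
       t i <= d (x i) (x j) + t j /\ d (x i) (x j) <= t i + t j) :
  exists p, forall i, (i < K)%nat -> d p (x i) = t i.
Proof.
  set (e := fun i j => if Nat.eqb i K then (if Nat.eqb j K then 0 else t j)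
                       else (if Nat.eqb j K then t i else d (x i) (x j))).
  destruct (Hun (S K) e) as [f Hf].
  { unfold e; split; [|split; [|split; [|split]]].
    - intros i j Hi Hj.
      destruct (Nat.eqb_spec i K), (Nat.eqb_spec j K); try lra;
        try (apply Rlt_le; apply Ht; lia); apply Hnn.
    - intros i j Hi Hj.
      destruct (Nat.eqb_spec i K), (Nat.eqb_spec j K); split; intro H; try lia; try lra.
      + assert (0 < t j) by (apply Ht; lia). lra.
      + assert (0 < t i) by (apply Ht; lia). lra.
      + apply Hzero in H. apply Hinj; auto; lia.
      + apply Hzero. subst; auto.
    - intros i j Hi Hj.
      destruct (Nat.eqb_spec i K), (Nat.eqb_spec j K); auto.
    - intros i j l Hi Hj Hl.
      destruct (Nat.eqb_spec i K), (Nat.eqb_spec j K), (Nat.eqb_spec l K); try lra.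
      all: try (subst; lra).
      + assert (0 < t j) by (apply Ht; lia). lra.
      + destruct (Hpair l j ltac:(lia) ltac:(lia)). rewrite Hsym. lra.
      + destruct (Hpair i l ltac:(lia) ltac:(lia)). lra.
      + destruct (Hpair i j ltac:(lia) ltac:(lia)). lra.
      + apply Htri.
    - intros i j Hi Hj.
      destruct (Nat.eqb_spec i K), (Nat.eqb_spec j K); auto; apply Ht; lia. }
  destruct (Hhom (map (fun i => (f i, x i)) (seq 0 K))) as [h [_ [Hiso Hmap]]].
  { intros p q Hp Hq.
    apply in_map_iff in Hp as [i [<- Hi]]. apply in_map_iff in Hq as [j [<- Hj]].
    apply in_seq in Hi. apply in_seq in Hj. simpl.
    rewrite Hf by lia. unfold e.
    destruct (Nat.eqb_spec i K); try lia. destruct (Nat.eqb_spec j K); try lia. auto. }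
  exists (h (f K)). intros i Hi.
  assert (Hhi : h (f i) = x i).
  { apply (Hmap (f i, x i)). apply in_map_iff. exists i. split; auto. apply in_seq. lia. }
  rewrite <- Hhi, Hiso, Hf by lia. unfold e.
  rewrite Nat.eqb_refl. destruct (Nat.eqb_spec i K); try lia. auto.
Qed.

Theorem lemma3p4 (D : list R) (HD : dist_set_ok D) (Huniv : universal_D D)
  (M : Type) (d : M -> M -> R) (HM : in_UD D M d)
  (r : R) (HrD : In r D) (Hr : 0 < r)
  (Hgap : forall t, In t D -> ~ (r < t /\ t <= 2 * r))
  (n : nat) (A : nat -> M -> Prop)
  (HA : forall i, (i < n)%nat -> sim_class d r (A i))
  (Hdist : forall i j, (i < n)%nat -> (j < n)%nat -> i <> j ->
             ~ (forall x, A i x <-> A j x)) :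
  exists a : nat -> M,
    (forall i, (i < n)%nat -> A i (a i)) /\
    (forall i j, (i < n)%nat -> (j < n)%nat -> is_dmin d (A i) (A j) (d (a i) (a j))).
Proof.
  destruct HM as [[Hnn [Hzero [Hsym Htri]]] [_ [Hhom [[HinD Hex] Hun]]]].
  destruct HD as [H0 _].
  destruct (Hex 0 H0) as [c0 _].
  assert (Hdd : forall x, d x x = 0) by (intro; apply Hzero; auto).
  assert (Hct : forall x y z, d x y <= r -> d y z <= r -> d x z <= r).
  { intros x y z H1 H2. destruct (Rle_dec (d x z) r); auto. exfalso.
    apply (Hgap (d x z) (HinD x z)). specialize (Htri x y z). lra. }
  assert (Hin_cls : forall i y z, (i < n)%nat -> A i y -> A i z -> d y z <= r).
  { intros i y z Hi Hy Hz. destruct (HA i Hi) as [c Hc].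
    apply Hc in Hy. apply Hc in Hz. apply (Hct y c z); auto. rewrite Hsym; auto. }
  assert (Hcls_close : forall i y z, (i < n)%nat -> A i y -> d y z <= r -> A i z).
  { intros i y z Hi Hy Hyz. destruct (HA i Hi) as [c Hc].
    apply Hc in Hy. apply Hc. apply (Hct c y z); auto. }
  assert (Hsep : forall i j y z, (i < n)%nat -> (j < n)%nat -> i <> j ->
                   A i y -> A j z -> r < d y z).
  { intros i j y z Hi Hj Hij Hy Hz. destruct (Rlt_dec r (d y z)) as [|Hn]; auto.
    exfalso. apply (Hdist i j Hi Hj Hij). intro w. split; intro Hw.
    - apply (Hcls_close j z w Hj Hz). apply (Hct z y w).
      + rewrite Hsym; lra.
      + apply (Hin_cls i y w Hi Hy Hw).
    - apply (Hcls_close i y w Hi Hy). apply (Hct y z w). lra.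
      apply (Hin_cls j z w Hj Hz Hw). }
  assert (Hne : forall i, (i < n)%nat -> exists c, A i c).
  { intros i Hi. destruct (HA i Hi) as [c Hc]. exists c. apply Hc. rewrite Hdd; lra. }
  assert (Hdmin : forall i j, (i < n)%nat -> (j < n)%nat -> exists m, is_dmin d (A i) (A j) m).
  { intros i j Hi Hj. destruct (Hne i Hi) as [a Ha]. destruct (Hne j Hj) as [b Hb].
    destruct (list_min (fun t => exists a b, A i a /\ A j b /\ d a b = t) D)
      as [m [_ [Hm Hmin]]].
    - exists (d a b). split; eauto 6.
    - exists m. split; auto. intros x y Hx Hy. apply Hmin; eauto 6. }
  set (dm := fun i j => epsilon (inhabits 0) (fun m => is_dmin d (A i) (A j) m)).
  assert (Hdm : forall i j, (i < n)%nat -> (j < n)%nat -> is_dmin d (A i) (A j) (dm i j)).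
  { intros i j Hi Hj. unfold dm. apply epsilon_spec. auto. }
  clearbody dm.
  assert (Hdmsym : forall i j, (i < n)%nat -> (j < n)%nat -> dm i j = dm j i).
  { intros i j Hi Hj. apply (dmin_unique d (A i) (A j)); auto.
    apply dmin_sym; auto. }
  assert (Hdm0 : forall i, (i < n)%nat -> dm i i = 0).
  { intros i Hi. destruct (Hdm i i Hi Hi) as [[a [b [Ha [Hb Hab]]]] Hl].
    specialize (Hl a a Ha Ha). specialize (Hnn a b). rewrite Hdd in Hl. lra. }
  assert (HdmD : forall i j, (i < n)%nat -> (j < n)%nat -> In (dm i j) D).
  { intros i j Hi Hj. destruct (Hdm i j Hi Hj) as [[a [b [Ha [Hb <-]]]] _]. auto. }
  assert (Hdmr : forall i j, (i < n)%nat -> (j < n)%nat -> i <> j -> r < dm i j).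
  { intros i j Hi Hj Hij. destruct (Hdm i j Hi Hj) as [[a [b [Ha [Hb <-]]]] _]. eauto. }
  assert (L3 : forall i j a, (i < n)%nat -> (j < n)%nat -> i <> j -> A i a ->
                 exists b, A j b /\ d a b = dm i j).
  { intros i j a Hi Hj Hij Ha.
    destruct (Hdm i j Hi Hj) as [[a0 [b0 [Ha0 [Hb0 Hab0]]]] Hl].
    assert (Hm : r < dm i j) by auto.
    assert (H1 : dm i j <= d a b0) by auto.
    assert (H2 : d a a0 <= r) by eauto.
    assert (H3 := Htri a a0 b0).
    assert (H4 : r < d a b0) by eauto.
    destruct (extension D d Hnn Hzero Hsym Htri HinD H0 Hhom Hun 2
       (fun l => if Nat.eqb l 0 then a else b0)
       (fun l => if Nat.eqb l 0 then dm i j else r)) as [p Hp].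
    - intros u v Hu Hv. destruct u as [|[|u]], v as [|[|v]]; simpl; intro E; try lia.
      + subst. rewrite Hdd in H4. lra.
      + subst. rewrite Hdd in H4. lra.
    - intros u Hu. destruct u as [|[|u]]; simpl; try lia; split; auto; lra.
    - intros u v Hu Hv. destruct u as [|[|u]], v as [|[|v]]; simpl; try lia;
        rewrite ?Hdd; try (rewrite (Hsym b0 a)); split; lra.
    - exists p. assert (P0 := Hp 0%nat ltac:(lia)). assert (P1 := Hp 1%nat ltac:(lia)).
      simpl in P0, P1. split.
      + apply (Hcls_close j b0 p Hj Hb0). rewrite Hsym. lra.
      + rewrite Hsym. auto. }
  assert (Htr : forall i j k, (i < n)%nat -> (j < n)%nat -> (k < n)%nat ->
             i <> j -> j <> k -> i <> k -> dm i k <= dm i j + dm j k).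
  { intros i j k Hi Hj Hk Hij Hjk Hik.
    destruct (Hdm j k Hj Hk) as [[b [c [Hb [Hc Hbc]]]] _].
    destruct (L3 j i b Hj Hi (not_eq_sym Hij) Hb) as [a [Ha Hba]].
    destruct (Hdm i k Hi Hk) as [_ Hl].
    specialize (Hl a c Ha Hc). specialize (Htri a b c).
    rewrite (Hsym a b), Hba, (Hdmsym j i) in Htri by auto. lra. }
  assert (Hind : forall k, (k <= n)%nat -> exists a : nat -> M,
     (forall i, (i < k)%nat -> A i (a i)) /\
     (forall i j, (i < k)%nat -> (j < k)%nat -> d (a i) (a j) = dm i j)).
  { induction k as [|k IH]; intro Hk.
    - exists (fun _ => c0). split; intros; lia.
    - destruct (IH ltac:(lia)) as [a [Ha Had]].
      destruct (HA k ltac:(lia)) as [c Hc].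
      assert (Hck : A k c) by (apply Hc; rewrite Hdd; lra).
      destruct (extension D d Hnn Hzero Hsym Htri HinD H0 Hhom Hun (S k)
         (fun l => if Nat.eqb l k then c else a l)
         (fun l => if Nat.eqb l k then r else dm l k)) as [p Hp].
      + intros u v Hu Hv.
        destruct (Nat.eqb_spec u k), (Nat.eqb_spec v k); intro E; try lia.
        * exfalso. assert (r < d c (a v)) by (apply (Hsep k v); try assumption; try apply Ha; lia).
          rewrite E, Hdd in H. lra.
        * exfalso. assert (r < d (a u) c) by (apply (Hsep u k); try assumption; try apply Ha; lia).
          rewrite E, Hdd in H. lra.
        * destruct (Nat.eq_dec u v); auto. exfalso.
          assert (r < d (a u) (a v)) by (apply (Hsep u v); try assumption; try apply Ha; lia).
          rewrite E, Hdd in H. lra.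
      + intros u Hu. destruct (Nat.eqb_spec u k); split; auto.
        * apply HdmD; lia.
        * assert (r < dm u k) by (apply Hdmr; lia). lra.
      + intros u v Hu Hv.
        destruct (Nat.eqb_spec u k), (Nat.eqb_spec v k).
        * rewrite Hdd. split; lra.
        * assert (r < d c (a v)) by (apply (Hsep k v); try assumption; try apply Ha; lia).
          destruct (L3 v k (a v) ltac:(lia) ltac:(lia) ltac:(lia) (Ha v ltac:(lia)))
            as [b [Hb Hvb]].
          assert (d b c <= r) by (apply (Hin_cls k); auto; lia).
          assert (Hr2 := Htri (a v) b c). rewrite (Hsym c (a v)) in *.
          assert (r < dm v k) by (apply Hdmr; lia). split; lra.
        * assert (r < d (a u) c) by (apply (Hsep u k); try assumption; try apply Ha; lia).
          destruct (L3 u k (a u) ltac:(lia) ltac:(lia) ltac:(lia) (Ha u ltac:(lia)))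
            as [b [Hb Hub]].
          assert (d b c <= r) by (apply (Hin_cls k); auto; lia).
          assert (Hr2 := Htri (a u) b c).
          destruct (Hdm u k ltac:(lia) ltac:(lia)) as [_ Hl].
          specialize (Hl (a u) c (Ha u ltac:(lia)) Hck). split; lra.
        * rewrite Had by lia.
          destruct (Nat.eq_dec u v).
          -- subst. rewrite Hdm0 by lia. assert (r < dm v k) by (apply Hdmr; lia). split; lra.
          -- assert (T1 := Htr u v k ltac:(lia) ltac:(lia) ltac:(lia) ltac:(lia) ltac:(lia) ltac:(lia)).
             assert (T2 := Htr u k v ltac:(lia) ltac:(lia) ltac:(lia) ltac:(lia) ltac:(lia) ltac:(lia)).
             rewrite (Hdmsym k v) in T2 by lia. split; lra.
      + exists (fun l => if Nat.eqb l k then p else a l). split.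
        * intros i Hi. destruct (Nat.eqb_spec i k); [|apply Ha; lia].
          subst. apply (Hcls_close k c p); [lia|auto|].
          assert (P := Hp k ltac:(lia)). cbn beta in P. rewrite Nat.eqb_refl in P.
          rewrite Hsym. lra.
        * intros i j Hi Hj.
          destruct (Nat.eqb_spec i k), (Nat.eqb_spec j k).
          -- subst. rewrite Hdd, Hdm0 by lia. auto.
          -- subst. assert (P := Hp j ltac:(lia)). cbn beta in P.
             destruct (Nat.eqb_spec j k); try lia. rewrite P. apply Hdmsym; lia.
          -- subst. assert (P := Hp i ltac:(lia)). cbn beta in P.
             destruct (Nat.eqb_spec i k); try lia. rewrite Hsym, P. auto.
          -- apply Had; lia. }
  destruct (Hind n (le_n n)) as [a [Ha Had]].
  exists a. split; auto. intros i j Hi Hj. rewrite Had by auto. auto.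
Qed.
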